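(* Let $q\ge 2$, $n\ge 1$, $f:\mathbb{Z}_q^n\to\mathbb{R}$, let $M$ be the $q$-ary Möbius transform of $f$, let $v$ be the associated value function and $a(v,\cdot)$ its set Möbius transform. Then for every $S\subseteq D$, $$a(v,S)\;=\;(-1)^{|S|}\sum_{\substack{\mathbf{k}\in\mathbb{Z}_q^n\\ k_j\neq 0\ \forall j\in S}} \frac{1}{q^{\|\mathbf{k}\|_0}}\,M[\mathbf{k}].$$
   Context: Elements of $\mathbb{Z}_q^n$ are vectors $\mathbf{m}=(m_1,\dots,m_n)$ with $m_i\in\{0,1,\dots,q-1\}$. $D=\{1,\dots,n\}$, and for $T\subseteq D$, $\bar T=D\setminus T$. $\|\mathbf{k}\|_0$ is the number of nonzero coordinates of $\mathbf{k}$. Partial order: $\mathbf{m}\le\mathbf{k}$ iff for every $i$, $m_i=k_i$ or $m_i=0$; in that case $\mathbf{k}-\mathbf{m}$ is the coordinatewise integer difference. The $q$-ary Möbius transform of $f$ is $M[\mathbf{k}]=\sum_{\mathbf{m}\le\mathbf{k}}(-1)^{\|\mathbf{k}-\mathbf{m}\|_0} f(\mathbf{m})$. The value function (query encoded as the all-zeros vector, uniform marginalization of absent features) is $v_T=\frac{1}{q^{|\bar T|}}\sum_{\mathbf{r}\in\mathbb{Z}_q^n:\ \mathbf{r}_T=\mathbf{0}} f(\mathbf{r})$ for $T\subseteq D$. The set Möbius transform of $v$ is $a(v,S)=\sum_{T\subseteq S}(-1)^{|S|-|T|}v_T$ for $S\subseteq D$. *)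

(* Defs.v *)
From mathcomp Require Import all_boot all_order all_algebra.
Set Implicit Arguments. Unset Strict Implicit. Unset Printing Implicit Defensive.
Import Order.TTheory GRing.Theory Num.Theory.
Local Open Scope ring_scope.

(* Elements of Z_q^n : finite functions 'I_n -> 'I_q (coordinate values 0..q-1).
   Coordinate index set D = {1..n} is represented by 'I_n (0-based). *)
Definition vec (q n : nat) := {ffun 'I_n -> 'I_q}.

Definition l0 (q n : nat) (k : vec q n) : nat := #|[set i | (k i : nat) != 0%N]|.

Definition vle (q n : nat) (m k : vec q n) : bool :=
  [forall i, (m i == k i) || ((m i : nat) == 0%N)].

Definition l0diff (q n : nat) (k m : vec q n) : nat :=
  #|[set i | (k i : nat) != (m i : nat)]|.

Definition qmobius (R : ringType) (q n : nat) (f : vec q n -> R) (k : vec q n) : R :=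
  \sum_(m : vec q n | vle m k) (-1) ^+ l0diff k m * f m.

Definition valfun (R : fieldType) (q n : nat) (f : vec q n -> R) (T : {set 'I_n}) : R :=
  (q%:R ^+ #|~: T|)^-1 * \sum_(r : vec q n | [forall i in T, (r i : nat) == 0%N]) f r.

Definition setmobius (R : ringType) (n : nat) (v : {set 'I_n} -> R) (S : {set 'I_n}) : R :=
  \sum_(T : {set 'I_n} | T \subset S) (-1) ^+ (#|S| - #|T|) * v T.

(* Main.v *)
Require Import Defs.
From mathcomp Require Import all_boot all_order all_algebra ring.
Import Order.TTheory GRing.Theory Num.Theory.
Local Open Scope ring_scope.

Lemma prod_if (R : comRingType) (I:finType) (P:pred I) (a : R):
  \prod_i (if P i then a else 1) = a ^+ #|P|.
Proof. by rewrite -big_mkcond /= prodr_const. Qed.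

Lemma prod_ind (R : comRingType) (I:finType) (P:pred I):
  \prod_i (if P i then 1 else 0) = (if [forall i, P i] then 1 else 0 : R).
Proof.
case: (boolP [forall i, P i]) => [/forallP H | /forallPn [i Hi]].
  by apply: big1 => i _; rewrite H.
by rewrite (bigD1 i) //= (negbTE Hi) mul0r.
Qed.

Lemma sign_sub (R : comRingType) (a b : nat) : (b <= a)%N ->
  (-1) ^+ (a - b) = (-1) ^+ a * (-1) ^+ b :> R.
Proof.
move=> hb; rewrite -{2}(subnK hb) exprD -mulrA -exprD.
by rewrite addnn -mul2n exprM sqrrN expr1n expr1n mulr1.
Qed.

Definition wt (R : fieldType) (q n : nat) (S : {set 'I_n}) (i : 'I_n) (x : 'I_q) : R :=
  (if (i \in S) && ((x : nat) == 0%N) then -1 else 0) + (q%:R)^-1.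

Lemma lhs_coef (R : fieldType) (q n : nat) (S : {set 'I_n}) (r : vec q n) :
  \sum_(T : {set 'I_n}) (if (T \subset S) && [forall i in T, (r i : nat) == 0%N]
     then (-1) ^+ (#|S| - #|T|) * (q%:R ^+ #|~: T|)^-1 else 0)
  = (-1) ^+ #|S| * \prod_i wt R q n S i (r i) :> R.
Proof.
rewrite /wt bigA_distr /= mulr_sumr; apply: eq_bigr => T _.
rewrite (bigID (fun i => i \in T)) /=.
rewrite [X in _ * (_ * X)](eq_bigr (fun _ => (q%:R)^-1)); last by move=> i /negbTE ->.
rewrite [X in _ * (_ * X)]prodr_const exprVn.
have -> : #|(fun i : 'I_n => i \notin T)| = #|~: T|.
 { by apply: eq_card => i; rewrite in_setC. }
case: (boolP ((T \subset S) && [forall i in T, (r i : nat) == 0%N])).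
  case/andP => /subsetP hTS /forall_inP hr.
  rewrite (eq_bigr (fun _ => -1)); last first.
    by move=> i hi; rewrite hi hTS // hr.
  rewrite prodr_const sign_sub; last by apply: subset_leq_card; apply/subsetP.
  by rewrite cardE /= -cardE mulrA.
move=> hc.
have [i hiT hi0] : exists2 i, i \in T & ~~ ((i \in S) && ((r i : nat) == 0%N)).
  move: hc; rewrite negb_and => /orP [/subsetPn [i hi hs] | /forall_inPn [i hi hs]].
    by exists i => //; rewrite (negbTE hs).
  by exists i => //; rewrite (negbTE hs) andbF.
by rewrite (bigD1 i) //= hiT (negbTE hi0) !mul0r mulr0.
Qed.

Lemma rhs_coef (R : fieldType) (q n : nat) (S : {set 'I_n}) (m : vec q n)
  (hq : (0 < q)%N) (hqR : q%:R != 0 :> R) :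
  \sum_(k : vec q n) (if [forall j in S, (k j : nat) != 0%N] && vle m k
     then (q%:R ^+ l0 k)^-1 * (-1) ^+ l0diff k m else 0)
  = \prod_i wt R q n S i (m i).
Proof.
pose g (i : 'I_n) (x : 'I_q) : R :=
  (if ((i \in S) ==> ((x : nat) != 0%N)) && ((m i == x) || ((m i : nat) == 0%N)) then 1 else 0)
  * (if (x : nat) != 0%N then q%:R^-1 else 1)
  * (if (x : nat) != (m i : nat) then -1 else 1).
transitivity (\sum_(k : vec q n) \prod_i g i (k i)).
  apply: eq_bigr => k _; rewrite big_split big_split /= prod_ind !prod_if.
  have -> : [forall i, ((i \in S) ==> ((k i : nat) != 0%N)) && ((m i == k i) || ((m i : nat) == 0%N))]
      = [forall j in S, (k j : nat) != 0%N] && vle m k.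
    apply/forallP/andP => [H|[/forall_inP H1 /forallP H2] i].
      split.
        by apply/forall_inP => j hj; have /andP[/implyP -> //] := H j.
      by apply/forallP => i; case/andP: (H i).
    by rewrite H2 andbT; apply/implyP; exact: H1.
  case: ifP => _; last by rewrite !mul0r.
  rewrite mul1r /l0 /l0diff exprVn.
  by congr (_ ^- _ * _ ^+ _); apply: eq_card => i; rewrite inE.
rewrite -bigA_distr_bigA /=; apply: eq_bigr => i _.
rewrite (bigD1 (m i)) //= /g /wt eqxx orTb andbT.
case: (boolP ((m i : nat) == 0%N)) => hm.
  rewrite (eq_bigr (fun _ => - q%:R^-1)); last first.
    move=> x hx.
    have hx0 : (x : nat) != 0%N by move: hx; apply: contra => /eqP hx; apply/eqP/val_inj; rewrite /= hx (eqP hm).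
    by rewrite (eqP hm) hx0 implybT orbT /= mul1r mulrN1.
  rewrite sumr_const cardC1 card_ord /= eqxx !mulr1 andbT.
  have hq1 : (q.-1%:R : R) = q%:R - 1 by rewrite -[in RHS](prednK hq) -natr1 addrK.
  rewrite -[_ *+ q.-1]mulr_natr hq1 mulNr mulrBr mulVf // mulr1.
  by case: (i \in S) => /=; rewrite ?mul1r ?mul0r; ring.
rewrite big1; last first.
  by move=> x hx; rewrite orbF (eq_sym (m i)) (negbTE hx) andbF !mul0r.
by rewrite implybT /= eqxx mul1r mulr1 addr0 andbF add0r.
Qed.

Theorem theorem2 (R : realFieldType) (q n : nat) (hq : (2 <= q)%N) (hn : (1 <= n)%N)
  (f : vec q n -> R) (S : {set 'I_n}) :
  setmobius (valfun f) S =
  (-1) ^+ #|S| *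
    \sum_(k : vec q n | [forall j in S, (k j : nat) != 0%N])
       (q%:R ^+ l0 k)^-1 * qmobius f k.
Proof.
have hq0 : (0 < q)%N by apply: leq_trans hq.
have hqR : q%:R != 0 :> R by rewrite pnatr_eq0 -lt0n.
transitivity ((-1) ^+ #|S| * \sum_(m : vec q n) f m * \prod_i wt R q n S i (m i)).
  rewrite /setmobius /valfun big_mkcond /=.
  transitivity (\sum_(T : {set 'I_n}) \sum_(r : vec q n)
     (if (T \subset S) && [forall i in T, (r i : nat) == 0%N]
      then (-1) ^+ (#|S| - #|T|) * (q%:R ^+ #|~: T|)^-1 else 0) * f r).
    apply: eq_bigr => T _; case: (T \subset S) => /=; last first.
      by rewrite big1 // => r _; rewrite mul0r.
    rewrite mulrA mulr_sumr big_mkcond /=; apply: eq_bigr => r _.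
    by case: ifP; rewrite ?mulr0 ?mul0r.
  rewrite exchange_big /= mulr_sumr; apply: eq_bigr => r _.
  by rewrite -mulr_suml lhs_coef -mulrA [_ * f r]mulrC.
congr (_ * _); symmetry.
rewrite /qmobius.
transitivity (\sum_(k : vec q n) \sum_(m : vec q n)
   (if [forall j in S, (k j : nat) != 0%N] && vle m k
    then (q%:R ^+ l0 k)^-1 * (-1) ^+ l0diff k m else 0) * f m); last first.
  rewrite exchange_big /=; apply: eq_bigr => m _.
  by rewrite -mulr_suml rhs_coef // mulrC.
rewrite big_mkcond /=; apply: eq_bigr => k _.
case: ([forall j in S, (k j : nat) != 0%N]) => /=; last first.
  by rewrite big1 // => m _; rewrite mul0r.
rewrite mulr_sumr big_mkcond /=; apply: eq_bigr => m _.
by case: ifP; rewrite ?mulr0 ?mul0r // mulrA.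
Qed.
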